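(* Let $k\ge2$ and $n\ge k$. In the simultaneous sealed-bid auction of $n$ objects among an adversary ${\mathcal A}$ and $k-1$ disadvantaged bidders described in the context, suppose each disadvantaged bidder independently draws his bid vector $(b_1,\dots,b_n)$ from an $n$-dimensional probability distribution with $\sum_i b_i=1$ such that each $b_i$ has cumulative distribution function $F_k$, where $F_k(x)=\left(\frac nk x\right)^{\frac1{k-1}}$ for $x\in[0,\frac kn]$ and $F_k(x)=1$ for $x\in(\frac kn,1]$. Then for every (possibly randomized, independent of the disadvantaged bidders' bids) bid vector of ${\mathcal A}$, the expected number of objects won by ${\mathcal A}$ is at most $n/k$.
   Context: Auction model: $n$ objects are auctioned simultaneously to $k$ bidders; each bidder has budget $1$ and submits a vector of bids (one per object, positive reals) with sum at most $1$. Each object is won by the highest bidder on it; if $m$ bidders tie for the highest bid, each wins with probability $1/m$. The adversary ${\mathcal A}$ knows the bidding algorithms (bid distributions) of the other $k-1$ bidders but not their realized bids. *)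

(* Defs.v *)
From HB Require Import structures.
From mathcomp Require Import all_boot all_order all_algebra.
From mathcomp Require Import all_classical all_reals all_analysis.
Set Implicit Arguments. Unset Strict Implicit. Unset Printing Implicit Defensive.
Import Order.TTheory GRing.Theory Num.Theory.
Local Open Scope classical_set_scope.
Local Open Scope ring_scope.

Definition Fk (R : realType) (n k : nat) (x : R) : R :=
  if x <= k%:R / n%:R then ((n%:R / k%:R) * x) `^ ((k%:R - 1)^-1) else 1.

Definition box (R : realType) (T : Type) (n : nat)
  (X : 'I_n -> T -> R) (S : 'I_n -> set R) : set T :=
  [set w | forall j, S j (X j w)].

(* Mutual independence of the random vectors A (adversary) and B 0, ..., B (m-1)
   (disadvantaged bidders): the product rule on measurable boxes (a pi-system
   generating each vector's sigma-algebra, containing the whole space, so this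
   is equivalent to independence of the generated sigma-algebras). *)
Definition bids_independent d (T : measurableType d) (R : realType)
  (P : probability T R) (n m : nat)
  (A : 'I_n -> T -> R) (B : 'I_m -> 'I_n -> T -> R) : Prop :=
  forall (SA : 'I_n -> set R) (SB : 'I_m -> 'I_n -> set R),
    (forall j, measurable (SA j)) -> (forall i j, measurable (SB i j)) ->
    P (box A SA `&` \bigcap_(i in [set: 'I_m]) box (B i) (SB i))
    = (P (box A SA) * \prod_(i < m) P (box (B i) (SB i)))%E.

(* Probability (over the uniform tie-breaking) that the adversary, bidding
   A j w on object j, wins object j against the bids B i j w: if it has a highest
   bid and ties with t other bidders it wins with probability 1/(t+1). *)
Definition win (R : realType) (T : Type) (n m : nat)
  (A : 'I_n -> T -> R) (B : 'I_m -> 'I_n -> T -> R) (j : 'I_n) (w : T) : R :=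
  if [forall i : 'I_m, B i j w <= A j w]
  then (1 + #|[set i : 'I_m | B i j w == A j w]|)%:R^-1
  else 0.

(* Main.v *)
Require Import Defs.
From HB Require Import structures.
From mathcomp Require Import all_boot all_order all_algebra.
From mathcomp Require Import all_classical all_reals all_analysis.
From mathcomp Require Import measurable_realfun.
From mathcomp Require Import zify ring lra.
Import Order.TTheory GRing.Theory Num.Theory.
Local Open Scope classical_set_scope.
Local Open Scope ring_scope.

Lemma ge0_le_integral_nm d (T : measurableType d) (R : realType)
  (mu : {measure set T -> \bar R}) (f g : T -> \bar R) :
  (forall x, (0 <= f x)%E) -> (forall x, (f x <= g x)%E) ->
  (\int[mu]_x f x <= \int[mu]_x g x)%E.
Proof.
move=> f0 fg.
rewrite !ge0_integralTE //; last by move=> x; exact: le_trans (f0 x) (fg x).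
apply: ereal_sup_le => _ [h hf <-]; exists h => //= x; exact: le_trans (hf x) (fg x).
Qed.

Lemma Fk_bound (R : realType) (n k : nat) (t : R) :
  (2 <= k)%N -> (k <= n)%N -> 0 <= t ->
  (Fk n k t) ^+ k.-1 <= n%:R / k%:R * t.
Proof.
move=> k2 kn t0; rewrite /Fk.
have k0 : (0 < k%:R :> R) by rewrite ltr0n; lia.
have n0 : (0 < n%:R :> R) by rewrite ltr0n; lia.
case: ifP => h.
  have a0 : 0 <= n%:R / k%:R * t by rewrite mulr_ge0 // divr_ge0 // ltW.
  rewrite -powR_mulrn ?powR_ge0 // -powRrM.
  have -> : (k%:R - 1)^-1 * k.-1%:R = 1 :> R.
    have -> : k.-1%:R = k%:R - 1 :> R by rewrite -subn1 natrB //; lia.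
    by rewrite mulVf // subr_eq0 pnatr_eq1; lia.
  by rewrite powRr1.
move/negbT: h; rewrite -ltNge => h; rewrite expr1n.
apply: le_trans (_ : n%:R / k%:R * (k%:R / n%:R) <= _).
  by rewrite mulrA divfK ?gt_eqF // divff // gt_eqF.
by rewrite ler_wpM2l ?ltW // divr_gt0.
Qed.

Lemma box_measurable d (T : measurableType d) (R : realType) (n : nat)
  (X : 'I_n -> T -> R) (S : 'I_n -> set R) :
  (forall j, measurable_fun setT (X j)) -> (forall j, measurable (S j)) ->
  measurable (box X S).
Proof.
move=> mX mS.
have -> : box X S = \bigcap_(j in [set: 'I_n]) (X j @^-1` S j).
  by apply/seteqP; split => [w /= H j _|w /= H j]; [exact: H|exact: H j I].
apply: fin_bigcap_measurable; first exact: finite_finset.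
move=> j _; rewrite -[_ @^-1` _]setTI; exact: mX.
Qed.

Lemma int_sum2 d (T : measurableType d) (R : realType)
  (mu : {measure set T -> \bar R}) (n M : nat) (F : 'I_n -> 'I_M -> T -> R) :
  (forall j m, measurable_fun setT (F j m)) -> (forall j m x, 0 <= F j m x) ->
  (\int[mu]_x (\sum_j \sum_m F j m x)%:E = \sum_j \sum_m \int[mu]_x (F j m x)%:E)%E.
Proof.
move=> mF F0.
under eq_integral => x _ do rewrite -sumEFin.
rewrite ge0_integral_sum //; last first.
- by move=> j x _; rewrite lee_fin sumr_ge0.
- by move=> j; apply/measurable_EFinP; apply: measurable_sum => m; exact: mF.
apply: eq_bigr => j _.
under eq_integral => x _ do rewrite -sumEFin.
rewrite ge0_integral_sum //.
- by move=> m; apply/measurable_EFinP; exact: mF.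
- by move=> m x _; rewrite lee_fin.
Qed.

Theorem lemma3p1 (R : realType) (d : measure_display) (T : measurableType d)
  (P : probability T R) (k n : nat)
  (A : 'I_n -> T -> R) (B : 'I_k.-1 -> 'I_n -> T -> R) :
  (2 <= k)%N -> (k <= n)%N ->
  (forall j, measurable_fun setT (A j)) ->
  (forall i j, measurable_fun setT (B i j)) ->
  (forall w j, 0 < A j w) -> (forall w, \sum_(j < n) A j w <= 1) ->
  (forall w i j, 0 < B i j w) -> (forall w i, \sum_(j < n) B i j w = 1) ->
  (forall i j (x : R), 0 <= x <= 1 ->
     P [set w | B i j w <= x] = (Fk n k x)%:E) ->
  bids_independent P A B ->
  ('E_P[fun w => (\sum_(j < n) win A B j w)%R] <= (n%:R / k%:R)%:E)%E.
Proof.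
move=> k2 kn mA mB A0 A1 B0 B1 HF Hind.
set c := n%:R / k%:R.
have c0 : 0 <= c by rewrite divr_ge0.
have Aj1 w j : A j w <= 1.
  apply: le_trans (A1 w); rewrite (bigD1 j) //= lerDl sumr_ge0 // => i _.
  exact: ltW.
have key (N : nat) : (0 < N)%N ->
    ('E_P[fun w => (\sum_(j < n) win A B j w)%R] <= (c * (1 + n%:R / N%:R))%:E)%E.
  move=> N0.
  have N0' : 0 < N%:R :> R by rewrite ltr0n.
  pose t (m : 'I_N.+1) : R := Num.min (m.+1%:R / N%:R) 1.
  have t01 m : 0 <= t m <= 1.
    by rewrite /t le_min ge_min lexx orbT divr_ge0 ?ler01 ?ltW.
  pose I (m : 'I_N.+1) : set R := [set` `[m%:R / N%:R, m.+1%:R / N%:R[%R].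
  pose SA (j : 'I_n) (m : 'I_N.+1) (j' : 'I_n) : set R :=
    if j' == j then I m else setT.
  pose SB (j : 'I_n) (m : 'I_N.+1) (i : 'I_k.-1) (j' : 'I_n) : set R :=
    if j' == j then [set` `]-oo, t m]%R] else setT.
  pose D j m := box A (SA j m).
  pose C j m := D j m `&` \bigcap_(i in [set: 'I_k.-1]) box (B i) (SB j m i).
  have mSA j m j' : measurable (SA j m j').
    by rewrite /SA; case: ifP => _; [exact: measurable_itv|exact: measurableT].
  have mSB j m i j' : measurable (SB j m i j').
    by rewrite /SB; case: ifP => _; [exact: measurable_itv|exact: measurableT].
  have mD j m : measurable (D j m) by apply: box_measurable.
  have mC j m : measurable (C j m).
    apply: measurableI; first exact: mD.
    apply: fin_bigcap_measurable; first exact: finite_finset.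
    by move=> i _; apply: box_measurable.
  have inD j m w : D j m w <-> (m%:R / N%:R <= A j w < m.+1%:R / N%:R).
    split => [H|H j'].
      by have := H j; rewrite /SA eqxx /I /= in_itv.
    by rewrite /SA; case: eqP => [->|]//; rewrite /I /= in_itv.
  have boxB j m i : box (B i) (SB j m i) = [set w | B i j w <= t m].
    apply/seteqP; split => [w /= H|w /= H j'].
      by have := H j; rewrite /SB eqxx /= in_itv.
    by rewrite /SB; case: eqP => [->|]//; rewrite /= in_itv.
  have PC j m : (P (C j m) <= P (D j m) * (c * t m)%:E)%E.
    rewrite /C Hind //; apply: lee_wpmul2l => //.
    rewrite (eq_bigr (fun _ => (Fk n k (t m))%:E)); last first.
      by move=> i _; rewrite boxB HF.
    rewrite prodEFin lee_fin prodr_const card_ord.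
    by apply: Fk_bound => //; case/andP: (t01 m).
  have m0P w j : exists m0 : 'I_N.+1, D j m0 w /\ (forall m, D j m w -> m = m0).
    pose x := N%:R * A j w.
    have x0 : 0 <= x by rewrite mulr_ge0 // ltW.
    have hm : (Num.truncn x < N.+1)%N.
      rewrite truncn_lt_nat // /x; apply: (@le_lt_trans _ _ N%:R).
        by rewrite ler_piMr // ltW.
      by rewrite ltr_nat.
    exists (Ordinal hm); split.
      apply/inD => /=; case/andP: (truncn_itv x0) => h1 h2.
      by rewrite ler_pdivrMr // ltr_pdivlMr // !(mulrC (A j w)) h1 h2.
    move=> m /inD /andP [h1 h2]; apply: val_inj => /=; apply/esym/truncn_def.
    by rewrite /x mulrC -ler_pdivrMr // -ltr_pdivlMr // h1 h2.
  have pw1 w : (\sum_(j < n) win A B j w)%R <=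
      \sum_(j < n) \sum_(m < N.+1) \1_(C j m) w.
    apply: ler_sum => j _; rewrite /win; case: ifP => H; last first.
      by apply: sumr_ge0 => m _; rewrite indicE ler0n.
    have [m0 [Dm0 _]] := m0P w j.
    rewrite (bigD1 m0) //=.
    have -> : \1_(C j m0) w = 1 :> R.
      rewrite indicE mem_set //; split => // i _; rewrite boxB /= /t le_min.
      move/forallP: H => /(_ i) H.
      move/inD: Dm0 => /andP [_ h2].
      by rewrite (le_trans H (ltW h2)) (le_trans H (Aj1 w j)).
    apply: (@le_trans _ _ 1).
      by rewrite invf_le1 ?ltr0n // ler1n.
    by rewrite lerDl sumr_ge0 // => m _; rewrite indicE ler0n.
  have pw2 w : \sum_(j < n) \sum_(m < N.+1) (c * t m * \1_(D j m) w)
      <= c * (1 + n%:R / N%:R).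
    apply: (@le_trans _ _ (\sum_(j < n) c * (A j w + N%:R^-1))).
      apply: ler_sum => j _.
      have [m0 [Dm0 um]] := m0P w j.
      rewrite (bigD1 m0) //= big1 ?addr0; last first.
        move=> m mm0; rewrite indicE memNset ?mulr0 //.
        by move=> /um mE; move: mm0; rewrite mE eqxx.
      rewrite indicE mem_set // mulr1 ler_wpM2l //.
      move/inD: Dm0 => /andP [h1 _].
      apply: (@le_trans _ _ (m0.+1%:R / N%:R)); first by rewrite /t ge_min lexx.
      by rewrite -natr1 mulrDl mul1r lerD2r.
    rewrite -mulr_sumr ler_wpM2l // big_split /= sumr_const card_ord.
    by apply: lerD; [exact: A1 | rewrite [_ / _]mulrC mulr_natr].
  apply: (@le_trans _ _ (\int[P]_w (\sum_(j < n) \sum_(m < N.+1) \1_(C j m) w)%:E)%E).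
    rewrite unlock; apply: ge0_le_integral_nm => w.
      rewrite (_ : 0%E = 0%:E) // lee_fin sumr_ge0 // => j _; rewrite /win; case: ifP => // _.
    by rewrite lee_fin; exact: pw1.
  rewrite (@int_sum2 _ _ _ P _ _ (fun j m w => \1_(C j m) w)); last 2 first.
    by move=> j m; apply: measurable_indic.
    by move=> j m w; rewrite indicE ler0n.
  under eq_bigr => j _ do under eq_bigr => m _ do rewrite integral_indic // setIT.
  apply: (@le_trans _ _ (\sum_(j < n) \sum_(m < N.+1) ((c * t m)%:E * P (D j m)))%E).
    by apply: lee_sum => j _; apply: lee_sum => m _; rewrite muleC; exact: PC.
  have eqD : (\sum_(j < n) \sum_(m < N.+1) ((c * t m)%:E * P (D j m)) =
      \int[P]_w (\sum_(j < n) \sum_(m < N.+1) (c * t m * \1_(D j m) w))%:E)%E.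
    rewrite (@int_sum2 _ _ _ P _ _ (fun j m w => c * t m * \1_(D j m) w)); last 2 first.
      move=> j m; apply: measurable_funM => //; exact: measurable_indic.
      move=> j m w; rewrite mulr_ge0 // ?mulr_ge0 // ?indicE ?ler0n //.
      by case/andP: (t01 m).
    apply: eq_bigr => j _; apply: eq_bigr => m _.
    under eq_integral => x _ do rewrite EFinM.
    rewrite ge0_integralZl_EFin ?integral_indic ?setIT //.
    by apply/measurable_EFinP; exact: measurable_indic.
    by rewrite mulr_ge0 //; case/andP: (t01 m).
  rewrite eqD.
  apply: (@le_trans _ _ (\int[P]_w (c * (1 + n%:R / N%:R))%:E)%E).
    apply: ge0_le_integral_nm => w; last by rewrite lee_fin; exact: pw2.
    rewrite lee_fin sumr_ge0 // => j _; rewrite sumr_ge0 // => m _.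
    rewrite mulr_ge0 // ?mulr_ge0 // ?indicE ?ler0n //.
    by case/andP: (t01 m).
  rewrite integral_cst // -[X in (_ <= X)%E]mule1; apply: lee_wpmul2l => //.
    by rewrite lee_fin mulr_ge0 // addr_ge0 // divr_ge0.
  exact: probability_le1.
apply/lee_addgt0Pr => e e0.
pose N := (Num.truncn (c * n%:R / e)).+1.
apply: le_trans (key N isT) _.
rewrite -EFinD lee_fin mulrDr mulr1 lerD2l.
have N0 : 0 < N%:R :> R by rewrite ltr0n.
rewrite mulrA ler_pdivrMr // [e * _]mulrC -ler_pdivrMr //.
by apply: ltW; exact: truncnS_gt.
Qed.
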